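(* Let $J$ be an instance of $1\,||\,\sum w_jU_j$ with $d_{\#}$ distinct due dates, maximum due date $d_{\max}$ and maximum weight $w_{\max}$. Let $A$ be its solution vector and $A'$ its fractional solution vector. Then $0\le A'[k]-A[k]\le d_{\#}w_{\max}$ for every $k\in\{0,\ldots,d_{\max}\}$.
   Context: Jobs $j\in J=\{1,\ldots,n\}$ have processing times $p_j\in\mathbb{N}$, weights $w_j\in\mathbb{N}$ and due dates $d_j\in\mathbb{N}$; $d_{\max}=\max_jd_j$, $w_{\max}=\max_jw_j$. A set $S\subseteq J$ is a set of early jobs if for every $j\in J$, $\sum_{\ell\in S: d_\ell\le d_j}p_\ell\le d_j$ (equivalently, some single-machine non-preemptive schedule completes every job of $S$ by its due date). The solution vector is $(A[k])_{k=0}^{d_{\max}}$, $A[k]$ = maximum total weight of a set of early jobs with total processing time at most $k$. A feasible fractional solution is a real vector $0\le x_1,\ldots,x_n\le1$ with $\sum_{\ell:d_\ell\le d_j}p_\ell x_\ell\le d_j$ for all $j$; the fractional solution vector is $(A'[k])_{k=0}^{d_{\max}}$ with $A'[k]$ = maximum of $\sum_jw_jx_j$ over feasible fractional solutions with $\sum_jp_jx_j\le k$. *)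

(* Defs.v *)
From HB Require Import structures.
From mathcomp Require Import all_boot all_order all_algebra.
From mathcomp Require Import all_classical all_reals.
Set Implicit Arguments. Unset Strict Implicit. Unset Printing Implicit Defensive.
Import Order.TTheory GRing.Theory Num.Theory.

(* An instance of 1||sum w_j U_j: n jobs indexed by 'I_n, with
   processing times p, weights w and due dates d (natural numbers). *)

Definition early_set (n : nat) (p d : 'I_n -> nat) (S : {set 'I_n}) : bool :=
  [forall j : 'I_n, (\sum_(l in S | d l <= d j) p l <= d j)%N].

Definition sol_vec (n : nat) (p w d : 'I_n -> nat) (k : nat) : nat :=
  \max_(S : {set 'I_n} | early_set p d S && (\sum_(j in S) p j <= k)%N)
     \sum_(j in S) w j.

Local Open Scope ring_scope.

Definition frac_feasible (R : realType) (n : nat) (p d : 'I_n -> nat)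
    (x : 'I_n -> R) : Prop :=
  (forall j, 0 <= x j <= 1) /\
  (forall j, \sum_(l | (d l <= d j)%N) (p l)%:R * x l <= (d j)%:R).

(* Fractional solution vector: A'[k] = max (= sup; the maximum is attained)
   of sum_j w_j x_j over feasible fractional x with sum_j p_j x_j <= k. *)
Definition frac_sol_vec (R : realType) (n : nat) (p w d : 'I_n -> nat)
    (k : nat) : R :=
  sup [set v : R | exists x : 'I_n -> R,
         frac_feasible p d x /\ \sum_j (p j)%:R * x j <= k%:R /\
         v = \sum_j (w j)%:R * x j].

Definition num_due_dates (n : nat) (d : 'I_n -> nat) : nat :=
  size (undup (codom d)).
Definition dmax (n : nat) (d : 'I_n -> nat) : nat := \max_j d j.
Definition wmax (n : nat) (w : 'I_n -> nat) : nat := \max_j w j.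

(* Main.v *)
Require Import Defs.
From HB Require Import structures.
From mathcomp Require Import all_boot all_order all_algebra.
From mathcomp Require Import all_classical all_reals.
From mathcomp Require Import lra.
Import Order.TTheory GRing.Theory Num.Theory.
Local Open Scope ring_scope.

Lemma exch1 (R : realType) (P1 W1 P2 W2 a g : R) :
  0 < P1 -> 0 < P2 -> 0 <= W1 -> 0 <= W2 -> W2 * P1 <= W1 * P2 ->
  0 <= a <= 1 -> 0 <= g <= 1 ->
  exists a' g', [/\ 0 <= a' <= 1, 0 <= g' <= 1, (a' = 1 \/ g' = 0),
    P1 * a' + P2 * g' <= P1 * a + P2 * g &
    W1 * a + W2 * g <= W1 * a' + W2 * g'].
Proof.
move=> hP1 hP2 hW1 hW2 hr /andP[a0 a1] /andP[g0 g1].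
have [hC|hC] := lerP P1 (P1 * a + P2 * g).
- pose g' := ((P1 * a + P2 * g - P1) / P2).
  have e : P2 * g' = P1 * a + P2 * g - P1 by rewrite /g' mulrC divfK // gt_eqF.
  exists 1, g'; clearbody g'.
  have g'0 : 0 <= g' by nra.
  have g'g : g' <= g by nra.
  split; [lra | lra | by left | lra | nra].
- pose a' := ((P1 * a + P2 * g) / P1).
  have e : P1 * a' = P1 * a + P2 * g by rewrite /a' mulrC divfK // gt_eqF.
  exists a', 0; clearbody a'.
  have a'0 : 0 <= a' by nra.
  have a'1 : a' <= 1 by nra.
  split; [lra | lra | by right | lra | nra].
Qed.

Arguments exch1 {R P1 W1 P2 W2 a g}.

Lemma exch (R : realType) (P1 W1 P2 W2 a g : R) :
  0 <= P1 -> 0 <= P2 -> 0 <= W1 -> 0 <= W2 ->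
  0 <= a <= 1 -> 0 <= g <= 1 ->
  exists a' g', [/\ 0 <= a' <= 1, 0 <= g' <= 1,
    (a' = 0 \/ a' = 1 \/ g' = 0 \/ g' = 1),
    P1 * a' + P2 * g' <= P1 * a + P2 * g &
    W1 * a + W2 * g <= W1 * a' + W2 * g'].
Proof.
move=> hP1 hP2 hW1 hW2 ha hg.
have [P10|P1p] := eqVneq P1 0.
  exists 1, g; rewrite P10; split => //; [lra | by right; left | lra | nra].
have [P20|P2p] := eqVneq P2 0.
  exists a, 1; rewrite P20; split => //; [lra | by right; right; right | lra | nra].
have hP1' : 0 < P1 by rewrite lt_def P1p.
have hP2' : 0 < P2 by rewrite lt_def P2p.
have [hr|hr] := lerP (W2 * P1) (W1 * P2).
  have [a' [g' [? ? [ea|eg] ? ?]]] := exch1 hP1' hP2' hW1 hW2 hr ha hg; subst.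
    by exists 1, g'; split; [done|done|right; left|done|done].
  by exists a', 0; split; [done|done|right; right; left|done|done].
have hr' : W1 * P2 <= W2 * P1 by lra.
have [g' [a' [? ? [ea|eg] ? ?]]] := exch1 hP2' hP1' hW2 hW1 hr' hg ha; subst.
  by exists a', 1; split; [done|done|right; right; right | lra | lra].
by exists 0, g'; split; [done|done|left | lra | lra].
Qed.

Arguments exch {R P1 W1 P2 W2 a g}.

Section Round.
Variables (R : realType) (n : nat) (p w : 'I_n -> nat) (x : 'I_n -> R).
Hypothesis Hx : forall j, 0 <= x j <= 1.

Definition addo (f : option 'I_n) (T : {set 'I_n}) :=
  if f is Some i then i |: T else T.

Lemma sum_addo (F : 'I_n -> R) f (T : {set 'I_n}) : (forall i, f = Some i -> i \notin T) ->
  \sum_(j in addo f T) F j = \sum_(j in T) F j + oapp F 0 f.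
Proof.
case: f => [i|] /= h; last by rewrite addr0.
by rewrite big_setU1 ?h // addrC.
Qed.

Lemma round_seq (s : seq 'I_n) : uniq s ->
  exists T : {set 'I_n}, exists f : option 'I_n, exists g : R,
  [/\ {subset T <= s}, (forall i, f = Some i -> (i \in s) && (i \notin T)),
   0 <= g <= 1,
   \sum_(j in T) (p j)%:R + oapp (fun i => (p i)%:R) 0 f * g
      <= \sum_(j <- s) (p j)%:R * x j &
   \sum_(j <- s) (w j)%:R * x j
      <= \sum_(j in T) (w j)%:R + oapp (fun i => (w i)%:R) 0 f * g].
Proof.
elim: s => [|a s IH] /=.
  exists finset.set0, None, 0; split => //; first by move=> j; rewrite inE.
  - by rewrite lexx ler01.
  - by rewrite big_set0 big_nil mulr0 addr0.
  - by rewrite big_set0 big_nil mulr0 addr0.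
case/andP => aS /IH [T [f [g [sT hf hg hp hw]]]].
have aT : a \notin T by apply/negP => /sT; rewrite (negbTE aS).
have hP2 : 0 <= oapp (fun i => (p i)%:R) 0 f :> R by by case: f {hf hp hw}.
have hW2 : 0 <= oapp (fun i => (w i)%:R) 0 f :> R by by case: f {hf hp hw hP2}.
have [a' [g' [ha' hg' hc hP hW]]] :=
  exch (ler0n R (p a)) hP2 (ler0n R (w a)) hW2 (Hx a) hg.
rewrite !big_cons.
have fa : forall i, f = Some i -> i != a.
  by move=> i /hf /andP[iS _]; apply/eqP => eia; rewrite -eia iS in aS.
case: hc => [ea'|[ea'|[eg'|eg']]].
- exists T, f, g'; split => //.
  + by move=> j /sT; rewrite inE => ->; rewrite orbT.
  + by move=> i /hf /andP[iS ->]; rewrite inE iS orbT.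
  + move: hP; rewrite ea' mulr0 add0r => hP; lra.
  + move: hW; rewrite ea' mulr0 add0r => hW; lra.
- exists (a |: T), f, g'; split => //.
  + by move=> j; rewrite !inE => /orP[->//|/sT ->]; rewrite orbT.
  + move=> i fi; have := hf i fi; have := fa i fi.
    by move=> ia /andP[iS iT]; rewrite !inE iS (negbTE ia) (negbTE iT) orbT.
  + rewrite big_setU1 //=; move: hP; rewrite ea' mulr1 => hP; lra.
  + rewrite big_setU1 //=; move: hW; rewrite ea' mulr1 => hW; lra.
- exists T, (Some a), a'; split => //.
  + by move=> j /sT; rewrite inE => ->; rewrite orbT.
  + by move=> i [<-]; rewrite inE eqxx aT.
  + move: hP; rewrite eg' mulr0 addr0 /= => hP; lra.
  + move: hW; rewrite eg' mulr0 addr0 /= => hW; lra.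
- have hfT : forall i, f = Some i -> i \notin T by move=> i /hf /andP[].
  exists (addo f T), (Some a), a'; split => //.
  + move=> j; case: f hf {hp hw hP hW hP2 hW2 fa hfT} => [i|] /= hf'; last first.
      by move/sT; rewrite inE => ->; rewrite orbT.
    rewrite !inE => /orP[/eqP ->|/sT ->]; last by rewrite orbT.
    by have /andP[-> _] := hf' i erefl; rewrite orbT.
  + move=> i [<-]; rewrite inE eqxx /=.
    case: f {hp hw hP hW hP2 hW2 hfT} hf fa => [i0|] //= hf fa.
    rewrite !inE negb_or aT andbT eq_sym fa //.
  + rewrite sum_addo //=; move: hP; rewrite eg' mulr1 => hP; lra.
  + rewrite sum_addo //=; move: hW; rewrite eg' mulr1 => hW; lra.
Qed.
End Round.

Section Main.
Variables (R : realType) (n : nat) (p w d : 'I_n -> nat).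

Lemma class_round (x : 'I_n -> R) (Hx : forall j, 0 <= x j <= 1) (D : nat) :
  exists T : {set 'I_n},
   [&& T \subset [set j | d j == D],
       \sum_(j in T) (p j)%:R <= \sum_(j | d j == D) (p j)%:R * x j &
       \sum_(j | d j == D) (w j)%:R * x j <= \sum_(j in T) (w j)%:R + (wmax w)%:R].
Proof.
have us : uniq [seq j <- index_enum 'I_n | d j == D].
  by rewrite filter_uniq // index_enum_uniq.
have [T [f [g [sT _ hg hp hw]]]] := @round_seq R n p w x Hx _ us.
exists T; rewrite !big_filter in hp hw.
apply/and3P; split.
- by apply/fintype.subsetP => j /sT; rewrite mem_filter inE => /andP[].
- apply: le_trans hp; rewrite lerDl; case: f {hw} => [i|] /=; last by rewrite mul0r.
  by rewrite mulr_ge0 //; case/andP: hg.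
- apply: (le_trans hw); rewrite lerD2l.
  case/andP: hg => g0 g1.
  case: f {hp hw} => [i|] /=; last by rewrite mul0r.
  apply: le_trans (_ : (w i)%:R * 1 <= _); first by rewrite ler_wpM2l.
  by rewrite mulr1 ler_nat /wmax; apply: (leq_bigmax i).
Qed.

Lemma partition_sum (F : 'I_n -> R) :
  \sum_j F j = \sum_(D <- undup (codom d)) \sum_(j | d j == D) F j.
Proof.
under [RHS]eq_bigr do rewrite big_mkcond.
rewrite exchange_big /=; apply: eq_bigr => j _.
have uU : uniq (undup (codom d)) by apply: undup_uniq.
have jU : d j \in undup (codom d) by rewrite mem_undup codom_f.
rewrite (bigD1_seq (d j)) //= eqxx big1 ?addr0 // => D; rewrite eq_sym.
by move/negbTE ->.
Qed.

End Main.

Section Main2.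
Variables (R : realType) (n : nat) (p w d : 'I_n -> nat).

Lemma sum_ind (F : 'I_n -> nat) (S : {set 'I_n}) (P : pred 'I_n) :
  \sum_(l | P l) (F l)%:R * (l \in S)%:R = (\sum_(l in S | P l) F l)%:R :> R.
Proof.
rewrite natr_sum [RHS]big_mkcond [LHS]big_mkcond; apply: eq_bigr => l _ /=.
by case: (l \in S); case: (P l); rewrite ?mulr1 ?mulr0.
Qed.

Lemma sum_constU (c : R) (U : seq nat) :
  \sum_(D <- U) c = (size U)%:R * c.
Proof.
elim: U => [|a U IH]; first by rewrite big_nil mul0r.
by rewrite big_cons IH /= -add1n natrD mulrDl mul1r.
Qed.

Lemma upper (k : nat) (x : 'I_n -> R) :
  frac_feasible p d x -> \sum_j (p j)%:R * x j <= k%:R ->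
  \sum_j (w j)%:R * x j <= (sol_vec p w d k)%:R + (num_due_dates d * wmax w)%:R.
Proof.
move=> [Hx Hd] Hk.
pose P D (T : {set 'I_n}) :=
   [&& T \subset [set j | d j == D],
       \sum_(j in T) (p j)%:R <= \sum_(j | d j == D) (p j)%:R * x j &
       \sum_(j | d j == D) (w j)%:R * x j <= \sum_(j in T) (w j)%:R + (wmax w)%:R].
pose TT D := odflt finset.set0 [pick T | P D T].
have HT : forall D, P D (TT D).
  move=> D; rewrite /TT; case: pickP => //= H.
  by have [T HT] := @class_round R n p w d x Hx D; have := H T; rewrite /P HT.
have TTd : forall D j, j \in TT D -> d j = D.
  move=> D j jT; have /and3P[/fintype.subsetP sub _ _] := HT D.
  by have := sub j jT; rewrite inE => /eqP.
pose S := [set j | j \in TT (d j)].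
have part := @partition_sum R n d.
have key : forall G : 'I_n -> R,
    \sum_(j in S) G j = \sum_(D <- undup (codom d)) \sum_(j in TT D) G j.
  move=> G; rewrite big_mkcond /= part; apply: eq_bigr => D _.
  rewrite [LHS]big_mkcond [RHS]big_mkcond; apply: eq_bigr => j _ /=.
  rewrite inE; case: eqP => [<-//|dD].
  by case: ifP => // /TTd.
have early : early_set p d S.
  apply/forallP => j0; rewrite -(ler_nat R) natr_sum big_mkcondr /= key.
  apply: le_trans (Hd j0).
  rewrite [X in _ <= X]big_mkcond /= part; apply: ler_sum => D _.
  have [DL|DL] := leqP D (d j0).
  - rewrite (eq_bigr (fun j => (p j)%:R)); last first.
      by move=> j /TTd ->; rewrite DL.
    have /and3P[_ h _] := HT D; apply: le_trans h _.
    rewrite [leRHS]big_mkcond [leLHS]big_mkcond /=; apply: ler_sum => j _.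
    case: eqP => [dD|_] //; rewrite dD DL //. 
  - rewrite big1; last by move=> j /TTd ->; rewrite leqNgt DL.
    apply: sumr_ge0 => j _; case: ifP => // _.
    by apply: mulr_ge0 => //; case/andP: (Hx j).
have budget : (\sum_(j in S) p j <= k)%N.
  rewrite -(ler_nat R) natr_sum key; apply: le_trans Hk.
  rewrite part; apply: ler_sum => D _.
  by have /and3P[_ h _] := HT D.
have hS : (\sum_(j in S) w j <= sol_vec p w d k)%N.
  by rewrite /sol_vec; apply: (leq_bigmax_cond (P := fun S => _)); rewrite early budget.
apply: le_trans (_ : (\sum_(j in S) w j)%:R + (num_due_dates d * wmax w)%:R <= _);
  last by rewrite lerD2r ler_nat.
rewrite part natr_sum key natrM -sum_constU -big_split /=.
apply: ler_sum => D _; by have /and3P[_ _ h] := HT D.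
Qed.

End Main2.

Theorem lemma18 (R : realType) (n : nat) (p w d : 'I_n -> nat) (k : nat) :
  (k <= dmax d)%N ->
  0 <= frac_sol_vec R p w d k - (sol_vec p w d k)%:R /\
  frac_sol_vec R p w d k - (sol_vec p w d k)%:R
    <= (num_due_dates d * wmax w)%:R.
Proof.
move=> _.
rewrite /frac_sol_vec.
match goal with |- context [sup ?X] => set E := X end.
have ub : forall v, E v -> v <= (sol_vec p w d k)%:R + (num_due_dates d * wmax w)%:R.
  by move=> v [x [hx [hk ->]]]; apply: upper.
have inE0 : E (sol_vec p w d k)%:R.
  pose PP := fun S : {set 'I_n} => early_set p d S && (\sum_(j in S) p j <= k)%N.
  have hpos : (0 < #|PP|)%N.
    apply/card_gt0P; exists finset.set0; rewrite /PP /in_mem /=.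
    apply/andP; split; last by rewrite big_set0.
    by apply/forallP => j; rewrite big_pred0 // => l; rewrite inE.
  have [S0 HS0 eS0] := @eq_bigmax_cond _ PP (fun S => \sum_(j in S) w j) hpos.
  case/andP: HS0 => He Hb.
  exists (fun j => (j \in S0)%:R); split; [split|split].
  - by move=> j; case: (j \in S0); rewrite ?lexx ?ler01.
  - move=> j; rewrite sum_ind ler_nat; exact: (forallP He j).
  - rewrite sum_ind ler_nat (eq_bigl (fun j => j \in S0)) // => j; by rewrite andbT.
  - rewrite sum_ind (eq_bigl (fun j => j \in S0)); last by move=> j; rewrite andbT.
    by rewrite /sol_vec eS0.
have hsup : has_sup E.
  by split; [exists (sol_vec p w d k)%:R | exists ((sol_vec p w d k)%:R + (num_due_dates d * wmax w)%:R)].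
have h1 := sup_upper_bound hsup inE0.
have h2 : sup E <= (sol_vec p w d k)%:R + (num_due_dates d * wmax w)%:R.
  by apply: ge_sup; [exists (sol_vec p w d k)%:R | exact: ub].
split; lra.
Qed.

Print Assumptions lemma18.
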